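(* Let $G\in\mathfrak D_4$ and let $\Upsilon\subseteq G$ be a subgraph isomorphic to the Mycielski–Grötzsch graph with vertices labelled $a_j,b_j$ ($j\in\mathbb Z/5\mathbb Z$), $c$. If $q\in V(G)$ is adjacent to $a_1$ and $a_4$, then either $q$ is a $\Upsilon$-twin of $c$, or $q\in\mathrm{Ext}(\Upsilon,a_0)$, i.e. $q$ is adjacent to each of $a_4,a_1,b_0$.
   Context: $\mathfrak D_4$ is the class of (finite) maximal triangle-free graphs satisfying property $\mathscr{D}_4$ (for every $m\in\{1,2,3,4\}$ and every sequence $x_1,\dots,x_{3m}$ of not necessarily distinct vertices there is a vertex $y$ with $|\{i: x_iy\in E(G)\}|\ge m+1$). Mycielski–Grötzsch graph: vertices $a_j,b_j$ ($j\in\mathbb Z/5\mathbb Z$), $c$; edges all pairs $a_jc$, $a_jb_{j\pm2}$, $b_jb_{j+2}$. For a subgraph $H$ of $G$, $q\in V(H)$, $q'\in V(G)$: $q'$ is an $H$-twin of $q$ if $\mathrm N(q)\cap V(H)=\mathrm N(q')\cap V(H)$ (neighbourhoods in $G$). For $i\in\mathbb Z/5\mathbb Z$, $\mathrm{Ext}(\Upsilon,a_i)$ is the set of common neighbours in $G$ of $a_{i-1},a_{i+1},b_i$. *)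

(* Defs.v *)
From mathcomp Require Import all_boot all_order all_algebra.
Set Implicit Arguments. Unset Strict Implicit. Unset Printing Implicit Defensive.
Import GRing.Theory.

Definition simple_graph (T : finType) (e : rel T) : Prop :=
  symmetric e /\ irreflexive e.

Definition triangle_free (T : finType) (e : rel T) : Prop :=
  forall x y z : T, e x y -> e y z -> ~~ e x z.

Definition maximal_triangle_free (T : finType) (e : rel T) : Prop :=
  simple_graph e /\ triangle_free e /\
  forall x y : T, x != y -> ~~ e x y -> exists z, e x z && e z y.

Definition prop_D4 (T : finType) (e : rel T) : Prop :=
  forall m : nat, 1 <= m <= 4 ->
  forall x : 'I_(3 * m) -> T,
  exists y : T, m.+1 <= #|[set i : 'I_(3 * m) | e (x i) y]|.

Definition in_class_D4 (T : finType) (e : rel T) : Prop :=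
  maximal_triangle_free e /\ prop_D4 e.

Definition MG_subgraph (T : finType) (e : rel T) (a b : 'Z_5 -> T) (c : T) : Prop :=
  injective a /\ injective b /\
  (forall i j, a i != b j) /\ (forall i, a i != c) /\ (forall i, b i != c) /\
  (forall j, e (a j) c) /\
  (forall j, e (a j) (b (j + 2)%R) /\ e (a j) (b (j - 2)%R)) /\
  (forall j, e (b j) (b (j + 2)%R)).

Definition in_MG (T : finType) (a b : 'Z_5 -> T) (c : T) (v : T) : bool :=
  (v == c) || [exists i : 'Z_5, (v == a i) || (v == b i)].

Definition twin_in (T : finType) (e : rel T) (a b : 'Z_5 -> T) (c : T) (q q' : T) : Prop :=
  forall v, in_MG a b c v -> e q v = e q' v.

Definition Ext (T : finType) (e : rel T) (a b : 'Z_5 -> T) (i : 'Z_5) (q : T) : bool :=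
  [&& e q (a (i - 1)%R), e q (a (i + 1)%R) & e q (b i)].

(* Main.v *)
Require Import Defs.
From mathcomp Require Import all_boot all_order all_algebra.
Import GRing.Theory.

Ltac solve_e sym := first [assumption | (rewrite sym; assumption) | done].
Ltac alle sym := rewrite /=; repeat (apply/andP; split); solve_e sym.

Fixpoint allbits (n : nat) : seq (seq bool) :=
  if n is n'.+1 then [seq x :: s | x <- [:: false; true], s <- allbits n'] else [:: [::]].

Lemma allbitsP n s : size s = n -> s \in allbits n.
Proof.
elim: n s => [|n IH] [|x s] // hs.
have {}hs : size s = n by case: hs.
rewrite [allbits _]/=.
by case: x; rewrite !mem_cat ?map_f ?IH ?orbT.
Qed.

Definition okbits (E : seq (nat * nat)) (s : seq bool) :=
  all (fun p => ~~ (nth false s p.1 && nth false s p.2)) E.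
Definition covers (s : seq bool) (S : seq nat) := all (nth false s) S.
Definition holds n m E Bads :=
  all (fun s => okbits E s ==> ((count id s <= m) || has (covers s) Bads)) (allbits n).

Lemma card_count n (f : nat -> bool) : #|[set i : 'I_n | f i]| = count f (iota 0 n).
Proof.
rewrite cardsE cardE -val_enum_ord count_map.
rewrite /enum_mem size_filter /=.
by rewrite (@eq_filter _ _ predT) ?filter_predT //.
Qed.

Lemma Dstep (T : finType) (e : rel T) (sym : symmetric e) (tf : triangle_free e)
  (D : prop_D4 e) (m : nat) (vs : seq T) (x0 : T) (E : seq (nat * nat))
  (Bads : seq (seq nat)) :
  (1 <= m <= 4) -> size vs = 3 * m ->
  all (fun p => e (nth x0 vs p.1) (nth x0 vs p.2)) E ->
  holds (3 * m) m E Bads ->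
  exists y, has (fun S => all (fun i => e (nth x0 vs i) y) S) Bads.
Proof.
move=> hm hs hE hH.
have [y hy] := D m hm (fun i => nth x0 vs i).
exists y.
set s := [seq e v y | v <- vs].
have ss : size s = 3 * m by rewrite size_map.
have nths : forall i, nth false s i = (i < 3 * m) && e (nth x0 vs i) y.
  move=> i; case: ltnP => hi; first by rewrite (nth_map x0) // hs.
  by rewrite nth_default // ss.
have cnt : #|[set i : 'I_(3 * m) | e (nth x0 vs i) y]| = count id s.
  rewrite (card_count (3 * m) (fun i => e (nth x0 vs i) y)).
  rewrite -[in RHS](mkseq_nth false s) /mkseq count_map ss.
  apply: eq_in_count => i; rewrite mem_iota /= add0n => hi.
  by rewrite nths hi.
have okb : okbits E s.
  apply/allP => [[i j]] hij /=; rewrite !nths.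
  apply/negP => /andP [/andP [_ hi] /andP [_ hj]].
  have /= hij' := allP hE _ hij.
  have hyj : e y (nth x0 vs j) by rewrite sym.
  by move: (tf _ _ _ hi hyj); rewrite hij'.
have := allP hH s (@allbitsP _ s ss); rewrite okb /= => /orP [hc | hb].
  by move: hy; rewrite cnt ltnNge hc.
apply: sub_has hb => S /allP hS; apply/allP => i hi.
by have := hS i hi; rewrite nths => /andP [_ ->].
Qed.


Lemma Lem (T : finType) (e : rel T) (sym : symmetric e) (tf : triangle_free e)
  (mtf : forall x y : T, x != y -> ~~ e x y -> exists z, e x z && e z y)
  (D : prop_D4 e) (c a0 a1 a2 a3 a4 b0 b1 b2 b3 b4 p : T) :
  e a0 c -> e a1 c -> e a2 c -> e a3 c -> e a4 c ->
  e a0 b2 -> e a0 b3 -> e a1 b3 -> e a1 b4 -> e a2 b4 ->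
  e a2 b0 -> e a3 b0 -> e a3 b1 -> e a4 b1 -> e a4 b2 ->
  e b0 b2 -> e b1 b3 -> e b2 b4 -> e b3 b0 -> e b4 b1 ->
  e p a4 -> e p a1 -> ~~ e p a0 -> ~~ e p b0 -> False.
Proof.
move=> h1 h2 h3 h4 h5 h6 h7 h8 h9 h10 h11 h12 h13 h14 h15 h16 h17 h18 h19 h20 hp4 hp1 np0 npb0.
have hne : p != a0.
  apply/eqP => ep; subst p.
  have hc1 : e c a1 by rewrite sym.
  by move: (tf _ _ _ h1 hc1); rewrite hp1.
have [z /andP [hpz hza0]] := mtf _ _ hne np0.
have [y hyy] := @Dstep T e sym tf D 4 [:: c; a0; a1; a2; a4; b0; b1; b2; b3; b4; p; z] c [:: (0,1); (0,2); (0,3); (0,4); (1,7); (1,8); (1,11); (2,8); (2,9); (2,10); (3,5); (3,9); (4,6); (4,7); (4,10); (5,7); (5,8); (6,8); (6,9); (7,9); (10,11)] [:: [:: 2; 3; 6; 7; 11]] isT (erefl _) ltac:(alle sym) ltac:(vm_compute; reflexivity).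
move: hyy; rewrite /= orbF !andbT => /and5P [y1 y2 y3 y4 y5].
have [w hyw] := @Dstep T e sym tf D 4 [:: c; a0; a1; a3; a4; b0; b1; b2; b3; p; z; y] c [:: (0,1); (0,2); (0,3); (0,4); (1,7); (1,8); (1,10); (2,8); (2,9); (2,11); (3,5); (3,6); (4,6); (4,7); (4,9); (5,7); (5,8); (6,8); (6,11); (7,11); (9,10); (10,11)] [:: ] isT (erefl _) ltac:(alle sym) ltac:(vm_compute; reflexivity).
by [].
Qed.


Lemma core (T : finType) (e : rel T) (sym : symmetric e) (tf : triangle_free e)
  (mtf : forall x y : T, x != y -> ~~ e x y -> exists z, e x z && e z y)
  (D : prop_D4 e) (c a0 a1 a2 a3 a4 b0 b1 b2 b3 b4 q : T) :
  e a0 c -> e a1 c -> e a2 c -> e a3 c -> e a4 c ->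
  e a0 b2 -> e a0 b3 -> e a1 b3 -> e a1 b4 -> e a2 b4 ->
  e a2 b0 -> e a3 b0 -> e a3 b1 -> e a4 b1 -> e a4 b2 ->
  e b0 b2 -> e b1 b3 -> e b2 b4 -> e b3 b0 -> e b4 b1 ->
  e q a1 -> e q a4 -> ~~ e q b0 -> [/\ e q a0, e q a2 & e q a3].
Proof.
move=> h1 h2 h3 h4 h5 h6 h7 h8 h9 h10 h11 h12 h13 h14 h15 h16 h17 h18 h19 h20 hq1 hq4 nqb0.
have LL := Lem _ _ sym tf mtf D.
have nqb3 : ~~ e q b3 by exact: (tf _ _ _ hq1 h8).
have nqb2 : ~~ e q b2 by exact: (tf _ _ _ hq4 h15).
have nb0c : ~~ e b0 c.
  have h11' : e b0 a2 by rewrite sym.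
  exact: (tf _ _ _ h11' h3).
have hq0 : e q a0.
  apply/negPn/negP => n0.
  by apply: (LL c a0 a1 a2 a3 a4 b0 b1 b2 b3 b4 q); solve_e sym.
suff: e q a2 && e q a3 by case/andP.
case h2q: (e q a2); case h3q: (e q a3) => //.
- exfalso; apply: (LL c a3 a4 a0 a1 a2 b3 b4 b0 b1 b2 q); try solve_e sym.
  by rewrite h3q.
- exfalso; apply: (LL c a2 a3 a4 a0 a1 b2 b3 b4 b0 b1 q); try solve_e sym.
  by rewrite h2q.
exfalso.
have nq2 : ~~ e q a2 by rewrite h2q.
have nq3 : ~~ e q a3 by rewrite h3q.
have [y hyy] := @Dstep T e sym tf D 2 [:: a2; a3; b0; b1; b4; q] c [:: (0,2); (0,4); (1,2); (1,3); (3,4)] [:: [:: 2; 4; 5]; [:: 2; 3; 5]; [:: 1; 4; 5]; [:: 0; 3; 5]; [:: 0; 1; 5]] isT (erefl _) ltac:(alle sym) ltac:(vm_compute; reflexivity).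
move: hyy; rewrite /= orbF !andbT.
case/orP => [/and3P [y1 y2 y3]|].
  have [w hyw] := @Dstep T e sym tf D 4 [:: c; a0; a1; a3; a4; b0; b1; b2; b3; b4; q; y] c [:: (0,1); (0,2); (0,3); (0,4); (1,7); (1,8); (1,10); (2,8); (2,9); (2,10); (3,5); (3,6); (4,6); (4,7); (4,10); (5,7); (5,8); (5,11); (6,8); (6,9); (7,9); (9,11); (10,11)] [:: [:: 1; 2; 3; 4; 11]] isT (erefl _) ltac:(alle sym) ltac:(vm_compute; reflexivity).
  move: hyw; rewrite /= orbF !andbT => /and5P [w1 w2 w3 w4 w5].
  by apply: (LL w a3 a4 a0 a1 y b3 b4 b0 b1 b2 q); solve_e sym.
case/orP => [/and3P [y1 y2 y3]|].
  have [w hyw] := @Dstep T e sym tf D 4 [:: c; a0; a1; a2; a4; b0; b1; b2; b3; b4; q; y] c [:: (0,1); (0,2); (0,3); (0,4); (1,7); (1,8); (1,10); (2,8); (2,9); (2,10); (3,5); (3,9); (4,6); (4,7); (4,10); (5,7); (5,8); (5,11); (6,8); (6,9); (6,11); (7,9); (10,11)] [:: [:: 1; 2; 3; 4; 11]] isT (erefl _) ltac:(alle sym) ltac:(vm_compute; reflexivity).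
  move: hyw; rewrite /= orbF !andbT => /and5P [w1 w2 w3 w4 w5].
  by apply: (LL w a2 a1 a0 a4 y b2 b1 b0 b4 b3 q); solve_e sym.
case/orP => [/and3P [y1 y2 y3]|].
  have [w hyw] := @Dstep T e sym tf D 4 [:: c; a0; a2; a3; a4; b0; b1; b2; b3; b4; q; y] c [:: (0,1); (0,2); (0,3); (0,4); (1,7); (1,8); (1,10); (2,5); (2,9); (3,5); (3,6); (3,11); (4,6); (4,7); (4,10); (5,7); (5,8); (6,8); (6,9); (7,9); (9,11); (10,11)] [:: [:: 2; 3; 7; 8; 10]] isT (erefl _) ltac:(alle sym) ltac:(vm_compute; reflexivity).
  move: hyw; rewrite /= orbF !andbT => /and5P [w1 w2 w3 w4 w5].
  by apply: (LL w q b2 a2 a3 b3 c b1 a1 a4 b4 b0); solve_e sym.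
case/orP => [/and3P [y1 y2 y3]|/and3P [y1 y2 y3]].
  have [w hyw] := @Dstep T e sym tf D 4 [:: c; a0; a1; a2; a3; b0; b1; b2; b3; b4; q; y] c [:: (0,1); (0,2); (0,3); (0,4); (1,7); (1,8); (1,10); (2,8); (2,9); (2,10); (3,5); (3,9); (3,11); (4,5); (4,6); (5,7); (5,8); (6,8); (6,9); (6,11); (7,9); (10,11)] [:: [:: 3; 4; 7; 8; 10]] isT (erefl _) ltac:(alle sym) ltac:(vm_compute; reflexivity).
  move: hyw; rewrite /= orbF !andbT => /and5P [w1 w2 w3 w4 w5].
  by apply: (LL w q b2 a2 a3 b3 c b1 a1 a4 b4 b0); solve_e sym.
have [w hyw] := @Dstep T e sym tf D 4 [:: c; a1; a2; a3; a4; b0; b1; b2; b3; b4; q; y] c [:: (0,1); (0,2); (0,3); (0,4); (1,8); (1,9); (1,10); (2,5); (2,9); (2,11); (3,5); (3,6); (3,11); (4,6); (4,7); (4,10); (5,7); (5,8); (6,8); (6,9); (7,9); (10,11)] [:: [:: 2; 3; 7; 8; 10]] isT (erefl _) ltac:(alle sym) ltac:(vm_compute; reflexivity).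
move: hyw; rewrite /= orbF !andbT => /and5P [w1 w2 w3 w4 w5].
by apply: (LL w q b2 a2 a3 b3 c b1 a1 a4 b4 b0); solve_e sym.
Qed.

Lemma Z5cases (i : 'Z_5) : i = 0%R \/ i = 1%R \/ i = 2%:R%R \/ i = 3%:R%R \/ i = 4%:R%R.
Proof.
case: i => [[|[|[|[|[|k]]]]] Hi].
- by left; apply/val_inj.
- by right; left; apply/val_inj.
- by right; right; left; apply/val_inj.
- by right; right; right; left; apply/val_inj.
- by right; right; right; right; apply/val_inj.
- by [].
Qed.

Theorem mainTheorem14 (T : finType) (e : rel T) (a b : 'Z_5 -> T) (c q : T) :
  in_class_D4 e ->
  MG_subgraph e a b c ->
  e q (a 1%R) -> e q (a 4%:R%R) ->
  twin_in e a b c c q \/ Ext e a b 0%R q.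
Proof.
move=> [[[sym irr] [tf mtf]] D] [_ [_ [_ [_ [_ [hac [hab hbb]]]]]]] hq1 hq4.
have Hab : forall i j k : 'Z_5, (i + 2)%R = j -> (i - 2)%R = k -> e (a i) (b j) /\ e (a i) (b k).
  by move=> i j k <- <-; apply: hab.
have Hbb : forall i j : 'Z_5, (i + 2)%R = j -> e (b i) (b j) by move=> i j <-; apply: hbb.
have [h6 h7] := Hab 0%R 2%:R%R 3%:R%R ltac:(by apply/val_inj) ltac:(by apply/val_inj).
have [h8 h9] := Hab 1%R 3%:R%R 4%:R%R ltac:(by apply/val_inj) ltac:(by apply/val_inj).
have [h10 h11] := Hab 2%:R%R 4%:R%R 0%R ltac:(by apply/val_inj) ltac:(by apply/val_inj).
have [h12 h13] := Hab 3%:R%R 0%R 1%R ltac:(by apply/val_inj) ltac:(by apply/val_inj).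
have [h14 h15] := Hab 4%:R%R 1%R 2%:R%R ltac:(by apply/val_inj) ltac:(by apply/val_inj).
have h16 := Hbb 0%R 2%:R%R ltac:(by apply/val_inj).
have h17 := Hbb 1%R 3%:R%R ltac:(by apply/val_inj).
have h18 := Hbb 2%:R%R 4%:R%R ltac:(by apply/val_inj).
have h19 := Hbb 3%:R%R 0%R ltac:(by apply/val_inj).
have h20 := Hbb 4%:R%R 1%R ltac:(by apply/val_inj).
have E4 : (0 - 1 = 4%:R :> 'Z_5)%R by apply/val_inj.
have E1 : (0 + 1 = 1 :> 'Z_5)%R by apply/val_inj.
case hb0: (e q (b 0%R)).
  by right; rewrite /Ext E4 E1 hq1 hq4 hb0.
left.
have [hq0 hq2 hq3] := core _ _ sym tf mtf D c (a 0%R) (a 1%R) (a 2%:R%R) (a 3%:R%R) (a 4%:R%R) (b 0%R) (b 1%R) (b 2%:R%R) (b 3%:R%R) (b 4%:R%R) q (hac 0%R) (hac 1%R) (hac 2%:R%R) (hac 3%:R%R) (hac 4%:R%R)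
  h6 h7 h8 h9 h10 h11 h12 h13 h14 h15 h16 h17 h18 h19 h20 hq1 hq4 (negbT hb0).
have nc : forall x y z, e x y -> e y z -> e x z = false.
  by move=> x y z hxy hyz; apply/negbTE; exact: tf _ _ _ hxy hyz.
have ecb : forall i, e c (b i) = false.
  move=> i; apply: (nc _ (a (i + 2)%R)); first by rewrite sym.
  by have [_ h] := hab (i + 2)%R; rewrite addrK in h.
have eqc : e q c = false by apply: (nc _ (a 1%R)).
move=> v /orP [/eqP -> | /existsP [i /orP [/eqP -> | /eqP ->]]].
- by rewrite irr eqc.
- by rewrite sym (hac i); case: (Z5cases i) => [->|[->|[->|[->|->]]]].
- rewrite ecb; case: (Z5cases i) => [->|[->|[->|[->|->]]]].
  + by rewrite hb0.
  + by apply/esym; apply: (nc _ (a 3%:R%R)); rewrite // sym.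
  + by apply/esym; apply: (nc _ (a 4%:R%R)); rewrite // sym.
  + by apply/esym; apply: (nc _ (a 1%R)); rewrite // sym.
  + by apply/esym; apply: (nc _ (a 1%R)); rewrite // sym.
Qed.
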